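(* Let $\alpha>0$ be irrational. Suppose there are sequences of positive integers $(p_n)_{n\ge1},(q_n)_{n\ge1}$ with $q_1<q_2<\cdots$ and a constant $K>0$ such that $|\alpha q_n-p_n|\le K/q_n$ for all $n$, and such that both sequences $(p_n)$ and $(q_n)$ are evenly divisible (respectively, strongly evenly divisible). Then for every $\varepsilon>0$ there is $C>0$ with $\delta_{\min}^{(\alpha)}(N)\le C N^{-1+\varepsilon}$ for infinitely many $N$ (respectively, there is $C>0$ with $\delta_{\min}^{(\alpha)}(N)\le C N^{-1}$ for infinitely many $N$). If in addition there is a constant $c>0$ with $q_n\ge c\,q_{n+1}$ for all $n$, then these inequalities hold for all $N\ge 2$.
   Context: For irrational $\alpha>0$, the numbers $\alpha m^2+n^2$ with integers $m,n\ge 1$ are pairwise distinct; list them in increasing order as $0<\lambda_1<\lambda_2<\cdots$. For $N\ge 2$ define $\delta_{\min}^{(\alpha)}(N)=\min\{\lambda_{i+1}-\lambda_i : 1\le i<N\}$. A sequence of positive integers $(a_n)$ is called evenly divisible if for every $\varepsilon>0$ there is $c_\varepsilon>0$ such that each $a_n$ has a divisor $d\mid a_n$ with $\min(d,a_n/d)\ge c_\varepsilon a_n^{1/2-\varepsilon}$; it is called strongly evenly divisible if there is $c>0$ such that each $a_n$ has a divisor $d\mid a_n$ with $\min(d,a_n/d)\ge c\,a_n^{1/2}$. *)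

(* Defs.v *)
From Stdlib Require Import Reals Lra Lia ZArith ClassicalEpsilon.
Open Scope R_scope.

Definition irrational (alpha : R) : Prop :=
  ~ (exists (a b : Z), b <> 0%Z /\ alpha = IZR a / IZR b).

Definition in_spec (alpha x : R) : Prop :=
  exists m n : nat, (1 <= m)%nat /\ (1 <= n)%nat /\
    x = alpha * INR m ^ 2 + INR n ^ 2.

(* l is the increasing enumeration of that set, 0-indexed:
   l 0 = lambda_1, l 1 = lambda_2, ... *)
Definition is_enum (alpha : R) (l : nat -> R) : Prop :=
  (forall i, l i < l (S i)) /\
  (forall x, (exists i, l i = x) <-> in_spec alpha x).

(* lambda_{i+1} = lam alpha i  (the enumeration is unique when it exists,
   which is the case for irrational alpha > 0). *)
Definition lam (alpha : R) : nat -> R :=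
  epsilon (inhabits (fun _ : nat => 0)) (is_enum alpha).

Fixpoint mingap (l : nat -> R) (k : nat) : R :=
  match k with
  | O => l 1%nat - l O
  | S k' => Rmin (mingap l k') (l (S (S k')) - l (S k'))
  end.

(* delta_min^(alpha)(N) = min_{1 <= i < N} (lambda_{i+1} - lambda_i), for N >= 2 *)
Definition delta_min (alpha : R) (N : nat) : R := mingap (lam alpha) (N - 2).

Definition evenly_divisible (a : nat -> nat) : Prop :=
  forall eps : R, 0 < eps -> exists c : R, 0 < c /\
    forall n : nat, exists d : nat, Nat.divide d (a n) /\
      c * Rpower (INR (a n)) (1/2 - eps) <= Rmin (INR d) (INR (a n) / INR d).

Definition strongly_evenly_divisible (a : nat -> nat) : Prop :=
  exists c : R, 0 < c /\
    forall n : nat, exists d : nat, Nat.divide d (a n) /\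
      c * sqrt (INR (a n)) <= Rmin (INR d) (INR (a n) / INR d).

(* Main.v *)
Require Import Defs.
From Stdlib Require Import Reals Lra Lia List ZArith ClassicalEpsilon FinFun Classical.
Open Scope R_scope.

Lemma nat_above (r : R) : exists n : nat, r < INR n.
Proof.
  destruct (archimed r) as [H1 _].
  destruct (Z_le_gt_dec 0 (up r)) as [Hz|Hz].
  - exists (Z.to_nat (up r)). rewrite INR_IZR_INZ, Z2Nat.id by lia; lra.
  - exists 0%nat. simpl. apply Z.gt_lt in Hz. apply IZR_lt in Hz. change (IZR 0) with 0 in Hz. lra.
Qed.

Lemma Rpower_pos (x y : R) : 0 < Rpower x y.
Proof. unfold Rpower; apply exp_pos. Qed.

Definition box_ok (alpha y : R) (A B : nat) : Prop :=
  forall m n : nat, (1 <= m)%nat -> (1 <= n)%nat ->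
    alpha * INR m ^ 2 + INR n ^ 2 <= y -> (m <= A)%nat /\ (n <= B)%nat.

Fixpoint boxlist (alpha : R) (A B : nat) : list R :=
  match A with
  | O => nil
  | S A' => boxlist alpha A' B ++ map (fun n => alpha * INR A ^ 2 + INR n ^ 2) (seq 1 B)
  end.

Lemma boxlist_length alpha A B : length (boxlist alpha A B) = (A * B)%nat.
Proof.
  induction A; simpl; auto. rewrite length_app, length_map, length_seq, IHA. lia.
Qed.

Lemma boxlist_in alpha A B m n : (1 <= m <= A)%nat -> (1 <= n <= B)%nat ->
  In (alpha * INR m ^ 2 + INR n ^ 2) (boxlist alpha A B).
Proof.
  induction A; intros Hm Hn; [lia|]. simpl. apply in_or_app.
  destruct (Nat.eq_dec m (S A)) as [->|Hne].
  - right. apply in_map_iff. exists n. split; [reflexivity|]. apply in_seq. lia.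
  - left. apply IHA; lia.
Qed.

Lemma boxlist_in_inv alpha A B y : In y (boxlist alpha A B) ->
  in_spec alpha y.
Proof.
  induction A; simpl; [tauto|]. intros H. apply in_app_or in H as [H|H]; auto.
  apply in_map_iff in H as [n [<- Hn]]. apply in_seq in Hn.
  exists (S A), n. repeat split; try lia.
Qed.

Lemma min_list (P : R -> Prop) (l : list R) : (exists x, In x l /\ P x) ->
  exists x, In x l /\ P x /\ forall y, In y l -> P y -> x <= y.
Proof.
  induction l as [|a l IH]; intros [x [Hx HP]]; [destruct Hx|].
  destruct (classic (exists x, In x l /\ P x)) as [Hex|Hnex].
  - destruct (IH Hex) as [z [Hz1 [Hz2 Hz3]]].
    destruct (classic (P a /\ a < z)) as [[Pa Ha]|Hn].
    + exists a. split; [left; auto|]. split; auto. intros y [<-|Hy] Py; [lra|].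
      specialize (Hz3 y Hy Py). lra.
    + exists z. split; [right; auto|]. split; auto. intros y [<-|Hy] Py; auto.
      apply Rnot_lt_le. intro. apply Hn. auto.
  - destruct Hx as [<-|Hx]; [|exfalso; apply Hnex; eauto].
    exists a. split; [left; auto|]. split; auto. intros y [<-|Hy] Py; [lra|].
    exfalso; apply Hnex; eauto.
Qed.

Section Enum.
Variable alpha : R.
Hypothesis Halpha : 0 < alpha.

Lemma spec_pos x : in_spec alpha x -> 0 < x.
Proof.
  intros [m [n [Hm [Hn ->]]]]. apply le_INR in Hm, Hn. simpl in *.
  assert (0 < INR n) by lra. nra.
Qed.

Lemma crude_box y : exists A B, box_ok alpha y A B.
Proof.
  destruct (nat_above (y / alpha)) as [A HA].
  destruct (nat_above y) as [B HB].
  exists A, B. intros m n Hm Hn H. apply le_INR in Hm, Hn. simpl in Hm, Hn.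
  assert (0 <= alpha * INR m ^ 2) by (apply Rmult_le_pos; [lra| apply pow2_ge_0]).
  assert (0 <= INR n ^ 2) by apply pow2_ge_0.
  split; apply INR_le.
  - assert (INR m ^ 2 <= y / alpha).
    { apply Rmult_le_reg_l with alpha; auto. field_simplify; lra. }
    nra.
  - nra.
Qed.

Lemma min_above t : exists x, in_spec alpha x /\ t < x /\
  forall y, in_spec alpha y -> t < y -> x <= y.
Proof.
  destruct (nat_above t) as [n0 Hn0].
  set (n := S n0).
  set (w := alpha * INR 1 ^ 2 + INR n ^ 2).
  assert (Hw : t < w).
  { unfold w, n. change (INR 1) with 1. rewrite (S_INR n0). pose proof (pos_INR n0). assert (0 < alpha * 1 ^ 2) by nra. assert (INR n0 + 1 <= (INR n0 + 1) ^ 2) by nra. lra. }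
  destruct (crude_box w) as [A [B HAB]].
  destruct (HAB 1%nat n) as [H1 H2]; [lia|unfold n; lia|unfold w; lra|].
  destruct (min_list (fun z => t < z) (boxlist alpha A B)) as [x [Hx1 [Hx2 Hx3]]].
  { exists w. split; auto. apply boxlist_in; unfold n in *; lia. }
  exists x. split; [eapply boxlist_in_inv; eauto|]. split; auto.
  intros y Hy Hty. destruct (Rle_lt_dec y w) as [Hyw|Hyw].
  - destruct Hy as [m [k [Hm [Hk ->]]]].
    destruct (HAB m k Hm Hk Hyw). apply Hx3; auto. apply boxlist_in; lia.
  - assert (x <= w). { apply Hx3; auto. apply boxlist_in; unfold n in *; lia. }
    lra.
Qed.

Definition next (t : R) : R := proj1_sig (constructive_indefinite_description _ (min_above t)).

Lemma next_spec t : in_spec alpha (next t) /\ t < next t /\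
  forall y, in_spec alpha y -> t < y -> next t <= y.
Proof. unfold next. destruct (constructive_indefinite_description _ _). simpl. auto. Qed.

Fixpoint lseq (i : nat) : R :=
  match i with O => next 0 | S i' => next (lseq i') end.

End Enum.

Lemma strict_mono (l : nat -> R) : (forall i, l i < l (S i)) ->
  forall i j, (i < j)%nat -> l i < l j.
Proof.
  intros H i j Hij. induction Hij; auto. specialize (H m). lra.
Qed.

Lemma strict_mono_le (l : nat -> R) : (forall i, l i < l (S i)) ->
  forall i j, (i <= j)%nat -> l i <= l j.
Proof.
  intros H i j Hij. destruct (Nat.eq_dec i j) as [->|]; [lra|].
  left. apply strict_mono; auto. lia.
Qed.

Lemma pigeon (l : nat -> R) (L : list R) (k : nat) : (forall i, l i < l (S i)) ->
  (forall i, (i <= k)%nat -> In (l i) L) -> (S k <= length L)%nat.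
Proof.
  intros Hl Hin.
  replace (S k) with (length (map l (seq 0 (S k)))) by (rewrite length_map, length_seq; auto).
  apply NoDup_incl_length.
  - apply Injective_map_NoDup; [|apply seq_NoDup].
    intros i j Hij. destruct (Nat.lt_total i j) as [H|[H|H]]; auto;
      apply (strict_mono l Hl) in H; lra.
  - intros x Hx. apply in_map_iff in Hx as [i [<- Hi]]. apply in_seq in Hi. apply Hin. lia.
Qed.

Lemma enum_exists alpha : 0 < alpha -> exists l, is_enum alpha l.
Proof.
  intros Ha. exists (lseq alpha Ha). assert (Hinc : forall i, lseq alpha Ha i < lseq alpha Ha (S i)).
  { intro i. simpl. apply next_spec; auto. }
  assert (Hsp : forall i, in_spec alpha (lseq alpha Ha i)).
  { destruct i; simpl; apply next_spec; auto. }
  split; auto. intros x; split.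
  - intros [i <-]; auto.
  - intros Hx. apply NNPP. intro Hne.
    assert (Hlt : forall i, lseq alpha Ha i < x).
    { induction i.
      + simpl. destruct (next_spec alpha Ha 0) as [_ [_ H]].
        specialize (H x Hx (spec_pos alpha Ha x Hx)).
        destruct H; auto. exfalso; apply Hne; exists 0%nat; auto.
      + simpl. destruct (next_spec alpha Ha (lseq alpha Ha i)) as [_ [_ H]].
        specialize (H x Hx IHi). destruct H; auto.
        exfalso; apply Hne; exists (S i); auto. }
    destruct (crude_box alpha Ha x) as [A [B HAB]].
    assert (S (A * B) <= length (boxlist alpha A B))%nat.
    { apply (pigeon (lseq alpha Ha)); auto. intros i _. destruct (Hsp i) as [m [n [Hm [Hn Heq]]]].
      rewrite Heq in *. destruct (HAB m n Hm Hn); [specialize (Hlt i); lra|].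
      apply boxlist_in; lia. }
    rewrite boxlist_length in H. lia.
Qed.

Lemma lam_enum alpha : 0 < alpha -> is_enum alpha (lam alpha).
Proof. intro Ha. unfold lam. apply epsilon_spec. apply enum_exists; auto. Qed.

Lemma mingap_le (l : nat -> R) k s : (s <= k)%nat -> mingap l k <= l (S s) - l s.
Proof.
  induction k; intros Hs; simpl.
  - replace s with 0%nat by lia. lra.
  - destruct (Nat.eq_dec s (S k)) as [->|Hne].
    + apply Rmin_r.
    + eapply Rle_trans; [apply Rmin_l|]. apply IHk; lia.
Qed.

Lemma mingap_mono (l : nat -> R) k k' : (k <= k')%nat -> mingap l k' <= mingap l k.
Proof.
  intros H; induction H; [lra|]. simpl. eapply Rle_trans; [apply Rmin_l|]. auto.
Qed.

Lemma mingap_pos (l : nat -> R) k : (forall i, l i < l (S i)) -> 0 < mingap l k.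
Proof.
  intros Hl; induction k; simpl.
  - specialize (Hl 0%nat). lra.
  - apply Rmin_glb_lt; auto. specialize (Hl (S k)). lra.
Qed.

Lemma delta_pos alpha N : 0 < alpha -> 0 < delta_min alpha N.
Proof. intro Ha. apply mingap_pos. apply lam_enum; auto. Qed.

Lemma delta_mono alpha N N' : (N <= N')%nat -> delta_min alpha N' <= delta_min alpha N.
Proof. intro H. unfold delta_min. apply mingap_mono. lia. Qed.

Lemma gap_bound alpha x y A B N : 0 < alpha ->
  in_spec alpha x -> in_spec alpha y -> x < y -> box_ok alpha y A B ->
  (2 <= N)%nat -> (A * B <= N)%nat -> delta_min alpha N <= y - x.
Proof.
  intros Ha Hx Hy Hxy Hbox HN HAB.
  destruct (lam_enum alpha Ha) as [Hinc Hsp].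
  destruct (proj2 (Hsp x) Hx) as [i Hi].
  destruct (proj2 (Hsp y) Hy) as [j Hj].
  assert (Hij : (i < j)%nat).
  { destruct (le_lt_dec j i) as [H|H]; auto.
    apply (strict_mono_le _ Hinc) in H. lra. }
  assert (Hj1 : (S j <= A * B)%nat).
  { rewrite <- boxlist_length with (alpha := alpha).
    apply (pigeon (lam alpha)); auto. intros k Hk.
    assert (Hk' : lam alpha k <= y) by (rewrite <- Hj; apply strict_mono_le; auto).
    destruct (proj1 (Hsp (lam alpha k)) (ex_intro _ k eq_refl)) as [m [n [Hm [Hn Heq]]]].
    rewrite Heq in *. destruct (Hbox m n Hm Hn Hk'). apply boxlist_in; lia. }
  unfold delta_min.
  destruct j as [|j]; [lia|].
  eapply Rle_trans; [apply (mingap_le _ _ j); lia|].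
  assert (lam alpha i <= lam alpha j) by (apply strict_mono_le; auto; lia).
  lra.
Qed.

Lemma ab_choice d e : (1 <= d)%nat -> (1 <= e)%nat -> exists a b : nat,
  a <> b /\ (a * b = 2 * (e * d))%nat /\ (a + b <= 2 * (d + e))%nat.
Proof.
  intros Hd He. destruct (Nat.eq_dec (2 * d) e) as [Heq|Hne].
  - exists (2 * e)%nat, d. split; [lia|]. split; [lia|lia].
  - exists (2 * d)%nat, e. split; [lia|]. split; [lia|lia].
Qed.

Definition ndist (a b : nat) : nat := ((a - b) + (b - a))%nat.

Lemma ndist_sq a b : INR (ndist a b) ^ 2 = (INR a - INR b) ^ 2.
Proof.
  unfold ndist. destruct (le_lt_dec a b) as [H|H].
  - replace (a - b)%nat with 0%nat by lia. rewrite Nat.add_0_l, minus_INR by lia. ring.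
  - replace (b - a)%nat with 0%nat by lia. rewrite Nat.add_0_r, minus_INR by lia. ring.
Qed.

Lemma ndist_pos a b : a <> b -> (1 <= ndist a b)%nat.
Proof. unfold ndist. lia. Qed.

Lemma sq_le u v : 0 <= u -> 0 <= v -> u ^ 2 <= v ^ 2 -> u <= v.
Proof. intros. destruct (Rle_lt_dec u v); auto. nra. Qed.

Lemma pair_lemma alpha k q p d e d' e' : 0 < alpha -> (1 <= k)%nat ->
  alpha <= INR k -> / alpha <= INR k -> q = (e * d)%nat -> p = (e' * d')%nat ->
  (1 <= d)%nat -> (1 <= e)%nat -> (1 <= d')%nat -> (1 <= e')%nat ->
  alpha * INR q - INR p <> 0 ->
  exists x y A B, in_spec alpha x /\ in_spec alpha y /\ x < y /\
    y - x <= 8 * Rabs (alpha * INR q - INR p) /\ box_ok alpha y A B /\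
    (A * B <= k * k * ((2 * (d + e) + 2 * (d' + e')) * (2 * (d + e) + 2 * (d' + e'))))%nat.
Proof.
  intros Ha Hk Hk1 Hk2 Hq Hp Hd He Hd' He' Hne.
  destruct (ab_choice d e Hd He) as [a [b [Hab [Hab2 Hab3]]]].
  destruct (ab_choice d' e' Hd' He') as [a' [b' [Hab' [Hab2' Hab3']]]].
  set (S := (a + b)%nat). set (T := (a' + b')%nat).
  assert (HS : (1 <= S)%nat) by (unfold S; lia).
  assert (HT : (1 <= T)%nat) by (unfold T; lia).
  set (x1 := alpha * INR S ^ 2 + INR (ndist a' b') ^ 2).
  set (x2 := alpha * INR (ndist a b) ^ 2 + INR T ^ 2).
  assert (Hx1 : in_spec alpha x1).
  { exists S, (ndist a' b'). repeat split; auto. apply ndist_pos; auto. }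
  assert (Hx2 : in_spec alpha x2).
  { exists (ndist a b), T. repeat split; auto. apply ndist_pos; auto. }
  assert (HqR : INR q = INR a * INR b / 2).
  { assert (H : INR (a * b) = INR (2 * q)) by (f_equal; lia).
    rewrite !mult_INR in H. simpl in H. lra. }
  assert (HpR : INR p = INR a' * INR b' / 2).
  { assert (H : INR (a' * b') = INR (2 * p)) by (f_equal; lia).
    rewrite !mult_INR in H. simpl in H. lra. }
  assert (Hdiff : x1 - x2 = 8 * (alpha * INR q - INR p)).
  { unfold x1, x2, S, T. rewrite !ndist_sq, !plus_INR, HqR, HpR. field. }
  set (Z := alpha * INR S ^ 2 + INR T ^ 2).
  assert (HaR := pos_INR a). assert (HbR := pos_INR b).
  assert (HaR' := pos_INR a'). assert (HbR' := pos_INR b').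
  assert (Hx1Z : x1 <= Z).
  { unfold x1, Z, T. rewrite ndist_sq, plus_INR. nra. }
  assert (Hx2Z : x2 <= Z).
  { unfold x2, Z, S. rewrite ndist_sq, plus_INR.
    assert ((INR a - INR b) ^ 2 <= (INR a + INR b) ^ 2) by nra. nra. }
  assert (Hbox : forall y, y <= Z -> box_ok alpha y (S + k * T) (k * S + T)).
  { intros y Hy m n Hm Hn Hmn.
    assert (HSR := pos_INR S). assert (HTR := pos_INR T).
    assert (HkR : 1 <= INR k) by (apply le_INR in Hk; simpl in Hk; lra).
    assert (Hak : 1 <= alpha * INR k).
    { apply Rmult_le_compat_l with (r := alpha) in Hk2; [|lra].
      rewrite Rinv_r in Hk2; lra. }
    assert (Hm2 := pow2_ge_0 (INR m)). assert (Hn2 := pow2_ge_0 (INR n)).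
    split; apply INR_le; [rewrite plus_INR, mult_INR | rewrite plus_INR, mult_INR];
      apply sq_le; try (apply pos_INR); try nra.
    - assert (alpha * INR m ^ 2 <= alpha * (INR S ^ 2 + INR k * INR T ^ 2)).
      { unfold Z in Hy.
        assert (INR T ^ 2 <= alpha * INR k * INR T ^ 2) by nra. nra. }
      assert (INR m ^ 2 <= INR S ^ 2 + INR k * INR T ^ 2).
      { apply Rmult_le_reg_l with alpha; auto. }
      assert (INR k * INR T ^ 2 <= INR k * INR k * INR T ^ 2).
      { apply Rmult_le_compat_r; [apply pow2_ge_0|]. nra. }
      assert (0 <= INR S * INR k * INR T) by (apply Rmult_le_pos; [apply Rmult_le_pos|]; lra).
      nra.
    - unfold Z in Hy.
      assert (alpha * INR S ^ 2 <= INR k * INR S ^ 2)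
        by (apply Rmult_le_compat_r; [apply pow2_ge_0|lra]).
      assert (INR k * INR S ^ 2 <= INR k * INR k * INR S ^ 2).
      { apply Rmult_le_compat_r; [apply pow2_ge_0|]. nra. }
      assert (0 <= INR S * INR k * INR T) by (apply Rmult_le_pos; [apply Rmult_le_pos|]; lra).
      assert (0 <= alpha * INR m ^ 2) by (apply Rmult_le_pos; lra).
      nra. }
  assert (HAB : ((S + k * T) * (k * S + T) <=
     k * k * ((2 * (d + e) + 2 * (d' + e')) * (2 * (d + e) + 2 * (d' + e'))))%nat).
  { set (W := (2 * (d + e) + 2 * (d' + e'))%nat).
    assert (HW : (S + T <= W)%nat) by (unfold W, S, T; lia).
    assert (H1 : (S + k * T <= k * W)%nat) by nia.
    assert (H2 : (k * S + T <= k * W)%nat) by nia.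
    replace (k * k * (W * W))%nat with ((k * W) * (k * W))%nat by ring.
    apply Nat.mul_le_mono; auto. }
  assert (H8 : forall u, 8 * Rabs u = Rabs (8 * u)).
  { intro u. rewrite Rabs_mult, (Rabs_pos_eq 8); lra. }
  destruct (Rlt_le_dec x2 x1) as [Hlt|Hle].
  - exists x2, x1, (S + k * T)%nat, (k * S + T)%nat.
    split; [auto|split; [auto|split; [auto|split; [|split; [apply Hbox; auto|auto]]]]].
    rewrite H8, <- Hdiff, Rabs_pos_eq; lra.
  - assert (Hlt : x1 < x2).
    { destruct Hle; auto. exfalso. apply Hne. lra. }
    exists x1, x2, (S + k * T)%nat, (k * S + T)%nat.
    split; [auto|split; [auto|split; [auto|split; [|split; [apply Hbox; auto|auto]]]]].
    rewrite H8, <- Hdiff, Rabs_left; lra.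
Qed.

Lemma key_ineq g H gam N Q : 0 < g -> 0 < H -> 0 < gam -> 0 < N -> 0 < Q ->
  N <= H * Rpower Q gam -> g / Q <= g * Rpower H (/ gam) * Rpower N (- / gam).
Proof.
  intros Hg HH Hgam HN HQ Hle.
  assert (Hu : Rpower N (/ gam) <= Rpower H (/ gam) * Q).
  { eapply Rle_trans.
    - apply Rle_Rpower_l; [left; apply Rinv_0_lt_compat; auto|split; [auto|apply Hle]].
    - rewrite <- Rpower_mult_distr; [|auto|apply Rpower_pos].
      rewrite Rpower_mult, Rinv_r, Rpower_1 by lra. lra. }
  rewrite Rpower_Ropp.
  assert (Hh := Rpower_pos H (/ gam)). assert (Hn := Rpower_pos N (/ gam)).
  set (h := Rpower H (/ gam)) in *. set (u := Rpower N (/ gam)) in *.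
  replace (g / Q) with (g * h * / (h * Q)) by (field; lra).
  apply Rmult_le_compat_l; [nra|]. apply Rinv_le_contravar; auto.
Qed.

Lemma q_ge (q : nat -> nat) : (forall n, (q n < q (S n))%nat) -> forall n, (n <= q n)%nat.
Proof. intros Hq n; induction n; [lia|]. specialize (Hq n). lia. Qed.

Lemma crossing (P : nat -> Prop) M : P 0%nat -> ~ P M -> exists n, P n /\ ~ P (S n).
Proof.
  intros H0; induction M; intros HM; [contradiction|].
  destruct (classic (P M)) as [HP|HP]; [exists M; auto|]. apply IHM; auto.
Qed.

Definition pairs_hyp (alpha : R) (q : nat -> nat) (g H gam : R) : Prop :=
  forall n, exists x y A B, in_spec alpha x /\ in_spec alpha y /\ x < y /\
    y - x <= g / INR (q n) /\ box_ok alpha y A B /\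
    INR (A * B) <= H * Rpower (INR (q n)) gam.

Lemma core alpha q g H gam : 0 < alpha -> (forall n, (0 < q n)%nat) ->
  (forall n, (q n < q (S n))%nat) -> 0 < g -> 0 < H -> 1 <= gam ->
  pairs_hyp alpha q g H gam ->
  (exists C, 0 < C /\ forall N0 : nat, exists N : nat, (N0 <= N)%nat /\ (2 <= N)%nat /\
      delta_min alpha N <= C * Rpower (INR N) (- / gam)) /\
  ((exists c, 0 < c /\ forall n, c * INR (q (S n)) <= INR (q n)) ->
    exists C, 0 < C /\ forall N : nat, (2 <= N)%nat ->
      delta_min alpha N <= C * Rpower (INR N) (- / gam)).
Proof.
  intros Ha Hq0 Hqinc Hg HH Hgam Hpairs.
  assert (HqR : forall n, 0 < INR (q n)) by (intro n; apply lt_0_INR; auto).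
  assert (Hh := Rpower_pos H (/ gam)).
  split.
  - exists (g * Rpower H (/ gam)). split; [nra|]. intros N0.
    set (M := Nat.max N0 2).
    assert (HdM := delta_pos alpha M Ha).
    destruct (nat_above (g / delta_min alpha M)) as [n Hn].
    assert (Hqn : g / delta_min alpha M < INR (q n)).
    { eapply Rlt_le_trans; [apply Hn|]. apply le_INR, q_ge; auto. }
    destruct (Hpairs n) as [x [y [A [B [Hx [Hy [Hxy [Hgap [Hbox HAB]]]]]]]]].
    assert (Hgq : g / INR (q n) < delta_min alpha M).
    { specialize (HqR n).
      apply Rmult_lt_compat_r with (r := delta_min alpha M) in Hqn; auto.
      unfold Rdiv in *. rewrite Rmult_assoc, Rinv_l in Hqn by lra.
      apply Rmult_lt_reg_r with (INR (q n)); auto.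
      rewrite Rmult_assoc, Rinv_l by lra. lra. }
    destruct (le_lt_dec (A * B) M) as [Hle|Hlt].
    + exfalso. assert (delta_min alpha M <= y - x).
      { eapply gap_bound; eauto. unfold M; lia. }
      lra.
    + exists (A * B)%nat. split; [unfold M in Hlt; lia|]. split; [unfold M in Hlt; lia|].
      eapply Rle_trans; [apply (gap_bound alpha x y A B (A * B)); auto; unfold M in Hlt; lia|].
      eapply Rle_trans; [apply Hgap|]. apply key_ineq; auto; try lra.
      apply lt_0_INR. unfold M in Hlt; lia.
  - intros [c [Hc Hratio]].
    set (D2 := delta_min alpha 2).
    assert (HD2 : 0 < D2) by apply delta_pos, Ha.
    set (q0 := INR (q 0%nat)).
    exists (g / c * Rpower H (/ gam) + D2 * q0 * Rpower H (/ gam)).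
    assert (Hq0R : 0 < q0) by apply HqR.
    split.
    { assert (0 < g / c) by (apply Rdiv_lt_0_compat; auto). assert (0 < g / c * Rpower H (/ gam)) by (apply Rmult_lt_0_compat; auto). assert (0 < D2 * q0 * Rpower H (/ gam)) by (repeat apply Rmult_lt_0_compat; auto). lra. }
    intros N HN.
    assert (HNR : 0 < INR N) by (apply lt_0_INR; lia).
    assert (HpN := Rpower_pos (INR N) (- / gam)).
    assert (Hgam0 : 0 < gam) by lra.
    set (P := fun n => H * Rpower (INR (q n)) gam <= INR N).
    destruct (classic (P 0%nat)) as [HP0|HP0].
    + destruct (nat_above (INR N / H)) as [M HM].
      assert (HPM : ~ P M).
      { unfold P. intro HPM.
        assert (HqM : INR M <= INR (q M)) by (apply le_INR, q_ge; auto).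
        assert (H1 : 1 <= INR (q M)) by (apply (le_INR 1); apply Hq0).
        assert (INR (q M) <= Rpower (INR (q M)) gam).
        { rewrite <- (Rpower_1 (INR (q M))) at 1 by lra. apply Rle_Rpower; lra. }
        apply Rmult_lt_compat_r with (r := H) in HM; auto.
        unfold Rdiv in HM. rewrite Rmult_assoc, Rinv_l in HM by lra. nra. }
      destruct (crossing P M HP0 HPM) as [n [HPn HPSn]].
      unfold P in HPn, HPSn.
      destruct (Hpairs n) as [x [y [A [B [Hx [Hy [Hxy [Hgap [Hbox HAB]]]]]]]]].
      assert (HABN : (A * B <= N)%nat) by (apply INR_le; lra).
      eapply Rle_trans; [apply (gap_bound alpha x y A B N); auto|].
      eapply Rle_trans; [apply Hgap|].
      assert (Hk : g / INR (q n) <= g / c * Rpower H (/ gam) * Rpower (INR N) (- / gam)).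
      { replace (g / INR (q n)) with ((g / c) / (INR (q n) / c)) by (specialize (HqR n); field; lra).
        apply key_ineq; auto.
        - apply Rdiv_lt_0_compat; auto.
        - apply Rdiv_lt_0_compat; auto.
        - left. eapply Rlt_le_trans; [apply Rnot_le_lt, HPSn|].
          apply Rmult_le_compat_l; [lra|]. apply Rle_Rpower_l; [lra|split; [apply HqR|]].
          specialize (Hratio n). apply Rmult_le_reg_l with c; auto.
          unfold Rdiv. field_simplify; lra. }
      assert (0 <= D2 * q0 * Rpower H (/ gam) * Rpower (INR N) (- / gam)).
      { repeat apply Rmult_le_pos; lra. }
      nra.
    + unfold P in HP0. apply Rnot_le_lt in HP0.
      eapply Rle_trans; [apply (delta_mono alpha 2 N HN)|]. fold D2.
      assert (H1 : 1 / q0 <= 1 * Rpower H (/ gam) * Rpower (INR N) (- / gam)).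
      { apply key_ineq; auto; try lra. unfold q0. lra. }
      assert (Hx : D2 <= D2 * q0 * Rpower H (/ gam) * Rpower (INR N) (- / gam)).
      { replace D2 with (D2 * q0 * (1 / q0)) at 1 by (field; lra).
        rewrite !Rmult_assoc. apply Rmult_le_compat_l; [lra|].
        apply Rmult_le_compat_l; [lra|]. lra. }
      assert (0 <= g / c * Rpower H (/ gam) * Rpower (INR N) (- / gam)).
      { assert (0 < g / c) by (apply Rdiv_lt_0_compat; auto).
        apply Rmult_le_pos; [apply Rmult_le_pos|]; lra. }
      nra.
Qed.

Definition divhyp (a : nat -> nat) (beta : R) : Prop :=
  exists c : R, 0 < c /\ forall n : nat, exists d : nat, Nat.divide d (a n) /\
    c * Rpower (INR (a n)) beta <= Rmin (INR d) (INR (a n) / INR d).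

Lemma de_bound a d e c beta : 0 < a -> 0 < d -> 0 < e -> a = d * e -> 0 < c ->
  c * Rpower a beta <= d -> c * Rpower a beta <= e ->
  d + e <= 2 / c * Rpower a (1 - beta).
Proof.
  intros Ha Hd He Hde Hc H1 H2.
  assert (Hs := Rpower_pos a beta). assert (Ht := Rpower_pos a (1 - beta)).
  assert (Hst : Rpower a beta * Rpower a (1 - beta) = a).
  { rewrite <- Rpower_plus. replace (beta + (1 - beta)) with 1 by ring. apply Rpower_1; auto. }
  set (s := Rpower a beta) in *. set (t := Rpower a (1 - beta)) in *.
  assert (c * d * s <= s * t) by nra.
  assert (c * e * s <= s * t) by nra.
  assert (c * d <= t) by (apply Rmult_le_reg_r with s; nra).
  assert (c * e <= t) by (apply Rmult_le_reg_r with s; nra).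
  apply Rmult_le_reg_l with c; auto. field_simplify; lra.
Qed.

Lemma get_de (a : nat -> nat) c beta : (forall n, (0 < a n)%nat) -> 0 < c ->
  forall n d, Nat.divide d (a n) ->
  c * Rpower (INR (a n)) beta <= Rmin (INR d) (INR (a n) / INR d) ->
  exists e, a n = (e * d)%nat /\ (1 <= d)%nat /\ (1 <= e)%nat /\
    INR d + INR e <= 2 / c * Rpower (INR (a n)) (1 - beta).
Proof.
  intros Hpos Hc n d [e He] Hb. exists e.
  assert (Hn := Hpos n).
  assert (Hd : (1 <= d)%nat) by (destruct d; lia).
  assert (Hee : (1 <= e)%nat) by (destruct e; lia).
  split; auto. split; auto. split; auto.
  assert (HdR : 0 < INR d) by (apply lt_0_INR; lia).
  assert (HeR : 0 < INR e) by (apply lt_0_INR; lia).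
  assert (Hprod : INR (a n) = INR d * INR e) by (rewrite He, mult_INR; ring).
  assert (Hq : INR (a n) / INR d = INR e) by (rewrite Hprod; field; lra).
  rewrite Hq in Hb.
  apply de_bound with (d := INR d) (e := INR e) (c := c); auto.
  - rewrite Hprod. nra.
  - eapply Rle_trans; [apply Hb|apply Rmin_l].
  - eapply Rle_trans; [apply Hb|apply Rmin_r].
Qed.

Lemma build alpha p q K beta : 0 < alpha -> irrational alpha ->
  (forall n, (0 < p n)%nat) -> (forall n, (0 < q n)%nat) -> 0 < K ->
  (forall n, Rabs (alpha * INR (q n) - INR (p n)) <= K / INR (q n)) ->
  divhyp p beta -> divhyp q beta -> 0 <= 1 - beta ->
  exists H, 0 < H /\ pairs_hyp alpha q (8 * K) H (2 * (1 - beta)).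
Proof.
  intros Ha Hirr Hp Hq HK Happ [c2 [Hc2 Hdp]] [c1 [Hc1 Hdq]] Hrho.
  destruct (nat_above (alpha + / alpha + 1)) as [k Hk].
  assert (Hia : 0 < / alpha) by (apply Rinv_0_lt_compat; auto).
  assert (Hk1 : (1 <= k)%nat) by (destruct k; [simpl in Hk; lra|lia]).
  set (rho := 1 - beta) in *.
  set (L := alpha + K).
  set (G := 4 / c1 + 4 / c2 * Rpower L rho).
  assert (HG : 0 < G).
  { unfold G. assert (0 < 4 / c1) by (apply Rdiv_lt_0_compat; lra).
    assert (0 < 4 / c2) by (apply Rdiv_lt_0_compat; lra).
    assert (Hr := Rpower_pos L rho). assert (0 < 4 / c2 * Rpower L rho) by (apply Rmult_lt_0_compat; auto). lra. }
  assert (HkR : 1 <= INR k) by (apply (le_INR 1); auto).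
  exists (INR k * INR k * G * G). split; [assert (0 < INR k * INR k) by nra; assert (0 < INR k * INR k * G) by (apply Rmult_lt_0_compat; auto); apply Rmult_lt_0_compat; auto|].
  intro n.
  destruct (Hdq n) as [d [Hd1 Hd2]].
  destruct (get_de q c1 beta Hq Hc1 n d Hd1 Hd2) as [e [Hqe [Hd [He Hdeb]]]].
  destruct (Hdp n) as [d' [Hd1' Hd2']].
  destruct (get_de p c2 beta Hp Hc2 n d' Hd1' Hd2') as [e' [Hpe [Hd' [He' Hdeb']]]].
  assert (HqR : 1 <= INR (q n)) by (apply (le_INR 1); apply Hq).
  assert (HpR : 1 <= INR (p n)) by (apply (le_INR 1); apply Hp).
  assert (Hne : alpha * INR (q n) - INR (p n) <> 0).
  { intro H0. apply Hirr. exists (Z.of_nat (p n)), (Z.of_nat (q n)). split.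
    - specialize (Hq n). lia.
    - rewrite <- !INR_IZR_INZ. field_simplify_eq; lra. }
  destruct (pair_lemma alpha k (q n) (p n) d e d' e' Ha Hk1 ltac:(lra) ltac:(lra)
     Hqe Hpe Hd He Hd' He' Hne) as [x [y [A [B [Hx [Hy [Hxy [Hgap [Hbox HAB]]]]]]]]].
  exists x, y, A, B. split; auto. split; auto. split; auto. split.
  { eapply Rle_trans; [apply Hgap|]. specialize (Happ n). unfold Rdiv in *. lra. }
  split; auto.
  apply le_INR in HAB.
  eapply Rle_trans; [apply HAB|].
  rewrite !mult_INR, !plus_INR. simpl (INR 2).
  set (W := 2 * (INR d + INR e) + 2 * (INR d' + INR e')).
  assert (HpL : INR (p n) <= L * INR (q n)).
  { specialize (Happ n). pose proof (Rle_abs (- (alpha * INR (q n) - INR (p n)))) as Hab.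
    rewrite Rabs_Ropp in Hab.
    assert (K / INR (q n) <= K).
    { unfold Rdiv. rewrite <- (Rmult_1_r K) at 2. apply Rmult_le_compat_l; [lra|].
      rewrite <- Rinv_1. apply Rinv_le_contravar; lra. }
    unfold L. nra. }
  assert (Hpp : Rpower (INR (p n)) rho <= Rpower L rho * Rpower (INR (q n)) rho).
  { rewrite Rpower_mult_distr; [|unfold L; lra|lra].
    apply Rle_Rpower_l; auto. split; lra. }
  assert (HW : W <= G * Rpower (INR (q n)) rho).
  { unfold W, G.
    assert (0 <= 4 / c2) by (left; apply Rdiv_lt_0_compat; lra).
    assert (4 / c2 * Rpower (INR (p n)) rho <= 4 / c2 * (Rpower L rho * Rpower (INR (q n)) rho))
      by (apply Rmult_le_compat_l; auto).
    unfold rho in *. unfold Rdiv in *. lra. }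
  assert (HW0 : 0 <= W) by (unfold W; pose proof (pos_INR d); pose proof (pos_INR e);
     pose proof (pos_INR d'); pose proof (pos_INR e'); lra).
  replace (2 * rho) with (rho + rho) by ring.
  rewrite Rpower_plus.
  assert (Hqr := Rpower_pos (INR (q n)) rho).
  assert (W * W <= (G * Rpower (INR (q n)) rho) * (G * Rpower (INR (q n)) rho))
    by (apply Rmult_le_compat; auto).
  assert (0 <= INR k * INR k) by nra.
  replace (INR k * INR k * G * G * (Rpower (INR (q n)) rho * Rpower (INR (q n)) rho))
    with (INR k * INR k * ((G * Rpower (INR (q n)) rho) * (G * Rpower (INR (q n)) rho))) by ring.
  apply Rmult_le_compat_l; auto. rewrite !mult_INR, !plus_INR. replace (INR 2) with 2 by (simpl; lra). fold W. auto.
Qed.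

Theorem lemma3p1 (alpha : R) (p q : nat -> nat) (K : R) :
  0 < alpha -> irrational alpha ->
  (forall n, (0 < p n)%nat) -> (forall n, (0 < q n)%nat) ->
  (forall n, (q n < q (S n))%nat) ->
  0 < K ->
  (forall n, Rabs (alpha * INR (q n) - INR (p n)) <= K / INR (q n)) ->
  ((evenly_divisible p -> evenly_divisible q ->
      (forall eps, 0 < eps -> exists C, 0 < C /\
         forall N0 : nat, exists N : nat, (N0 <= N)%nat /\ (2 <= N)%nat /\
           delta_min alpha N <= C * Rpower (INR N) (-1 + eps)) /\
      ((exists c, 0 < c /\ forall n, c * INR (q (S n)) <= INR (q n)) ->
       forall eps, 0 < eps -> exists C, 0 < C /\
         forall N : nat, (2 <= N)%nat ->
           delta_min alpha N <= C * Rpower (INR N) (-1 + eps)))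
   /\
   (strongly_evenly_divisible p -> strongly_evenly_divisible q ->
      (exists C, 0 < C /\
         forall N0 : nat, exists N : nat, (N0 <= N)%nat /\ (2 <= N)%nat /\
           delta_min alpha N <= C / INR N) /\
      ((exists c, 0 < c /\ forall n, c * INR (q (S n)) <= INR (q n)) ->
       exists C, 0 < C /\
         forall N : nat, (2 <= N)%nat -> delta_min alpha N <= C / INR N))).
Proof.
  intros Ha Hirr Hp Hq Hinc HK Happ. split.
  - intros Hep Heq.
    assert (Hcore : forall eps, 0 < eps -> exists H, 0 < H /\
      pairs_hyp alpha q (8 * K) H (2 * (1 - (1 / 2 - eps / 2)))).
    { intros eps Heps. apply (build alpha p q K); auto.
      - apply Hep. lra.
      - apply Heq. lra.
      - lra. }
    assert (Hexp : forall eps (N : nat), 0 < eps -> (2 <= N)%nat ->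
      Rpower (INR N) (- / (2 * (1 - (1 / 2 - eps / 2)))) <= Rpower (INR N) (-1 + eps)).
    { intros eps N Heps HN. apply Rle_Rpower.
      - apply (le_INR 1). lia.
      - replace (2 * (1 - (1 / 2 - eps / 2))) with (1 + eps) by field.
        assert (1 - eps <= / (1 + eps)).
        { apply Rmult_le_reg_r with (1 + eps); [lra|]. rewrite Rinv_l by lra. nra. }
        lra. }
    split.
    + intros eps Heps. destruct (Hcore eps Heps) as [H [HH Hpairs]].
      destruct (core alpha q (8 * K) H (2 * (1 - (1 / 2 - eps / 2))) Ha Hq Hinc ltac:(lra) HH ltac:(lra) Hpairs)
        as [[C [HC HC2]] _].
      exists C. split; auto. intros N0. destruct (HC2 N0) as [N [H1 [H2 H3]]].
      exists N. split; auto. split; auto. eapply Rle_trans; [apply H3|].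
      apply Rmult_le_compat_l; [lra|]. apply Hexp; auto.
    + intros Hrat eps Heps. destruct (Hcore eps Heps) as [H [HH Hpairs]].
      destruct (core alpha q (8 * K) H (2 * (1 - (1 / 2 - eps / 2))) Ha Hq Hinc ltac:(lra) HH ltac:(lra) Hpairs)
        as [_ Hc2].
      destruct (Hc2 Hrat) as [C [HC HC2]].
      exists C. split; auto. intros N HN. eapply Rle_trans; [apply HC2; auto|].
      apply Rmult_le_compat_l; [lra|]. apply Hexp; auto.
  - intros Hsp Hsq.
    assert (Hconv : forall a, (forall n, (0 < a n)%nat) -> strongly_evenly_divisible a -> divhyp a (/ 2)).
    { intros a Hpos [c [Hc Hd]]. exists c. split; auto. intros n.
      destruct (Hd n) as [d [H1 H2]]. exists d. split; auto.
      rewrite Rpower_sqrt; auto. apply lt_0_INR, Hpos. }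
    destruct (build alpha p q K (/ 2) Ha Hirr Hp Hq HK Happ (Hconv p Hp Hsp) (Hconv q Hq Hsq)
      ltac:(lra)) as [H [HH Hpairs]].
    assert (Hg : 2 * (1 - / 2) = 1) by field.
    rewrite Hg in Hpairs.
    destruct (core alpha q (8 * K) H 1 Ha Hq Hinc ltac:(lra) HH ltac:(lra) Hpairs)
      as [[C [HC HC2]] Hc2].
    assert (Hpw : forall N : nat, (2 <= N)%nat -> Rpower (INR N) (- / 1) = / INR N).
    { intros N HN. rewrite Rinv_1, Rpower_Ropp, Rpower_1; auto. apply lt_0_INR; lia. }
    split.
    + exists C. split; auto. intros N0. destruct (HC2 N0) as [N [H1 [H2 H3]]].
      exists N. split; auto. split; auto. rewrite Hpw in H3; auto.
    + intros Hrat. destruct (Hc2 Hrat) as [C' [HC' HC2']].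
      exists C'. split; auto. intros N HN. specialize (HC2' N HN). rewrite Hpw in HC2'; auto.
Qed.
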